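(* Let $f:\mathcal{X}\to\mathbb{R}$ be any function, let $\varphi:\mathcal{X}\to\mathcal{X}$ be any map, and let $\mathcal{A}\subset\mathcal{X}$ be a finite set such that $D:=\sum_{x\in\mathcal{A}}|f(\varphi(x))-f(x)|^2\neq 0$. Define $$WCM(\varphi;f):=1-\sqrt{\frac{\min_{\pi\in \Pi(\mathcal{A})}\sum_{x\in\mathcal{A}}|f(\varphi(\pi(x)))-f(x)|^2}{D}},$$ where $\Pi(\mathcal{A})$ is the set of all permutations (bijections) $\pi:\mathcal{A}\to\mathcal{A}$. Then $WCM(\varphi;f)\in[0,1]$. Moreover: (i) $WCM(\varphi;f)=0$ if and only if the natural pairing $\{(f(x),f(\varphi(x)))\}_{x\in\mathcal{A}}$ maximizes the covariance among all pairings $\{(f(x),f(\varphi(\pi(x))))\}_{x\in\mathcal{A}}$, $\pi\in\Pi(\mathcal{A})$ (equivalently, the identity permutation attains the minimum in the numerator); (ii) $WCM(\varphi;f)=1$ if and only if there exists a permutation $\pi\in\Pi(\mathcal{A})$ which is not the identity such that $f(x)=f(\varphi(\pi(x)))$ for every $x\in\mathcal{A}$; (iii) for every $\lambda>0$, $WCM(\varphi;f)=WCM(\varphi;\lambda f)$.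
   Context: Here $f$ plays the role of a fixed black-box real-valued predictor, $\varphi$ a perturbation of inputs, and $\mathcal{A}$ a finite auditing set; $WCM$ is called the Wasserstein Coherence Metric. *)

(* Defs.v *)
From HB Require Import structures.
From mathcomp Require Import all_boot all_order all_algebra all_fingroup.
From mathcomp Require Import finmap.
Set Implicit Arguments. Unset Strict Implicit. Unset Printing Implicit Defensive.
Import Order.TTheory GRing.Theory Num.Theory.
Local Open Scope ring_scope.
Local Open Scope fset_scope.

Section WCM.
Variables (R : rcfType) (X : choiceType).
Implicit Types (f : X -> R) (phi : X -> X) (A : {fset X}).

Definition wcm_cost f phi A (p : {perm A}) : R :=
  \sum_(x : A) (f (phi (val (p x))) - f (val x)) ^+ 2.

Definition wcm_D f phi A : R := wcm_cost f phi (1%g : {perm A}).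

(* minimum over all permutations of A (the identity is among them) *)
Definition wcm_min f phi A : R :=
  \big[Num.min/wcm_D f phi A]_(p : {perm A}) wcm_cost f phi p.

Definition WCM f phi A : R := 1 - Num.sqrt (wcm_min f phi A / wcm_D f phi A).

Definition pairing_cov f phi A (p : {perm A}) : R :=
  let n := (#|{: A}|)%:R in
  (\sum_(x : A) f (val x) * f (phi (val (p x)))) / n
  - ((\sum_(x : A) f (val x)) / n) * ((\sum_(x : A) f (phi (val (p x)))) / n).

End WCM.

(* Main.v *)
Require Import Defs.
From HB Require Import structures.
From mathcomp Require Import all_boot all_order all_algebra all_fingroup.
From mathcomp Require Import finmap.
From mathcomp Require Import ring lra.
Import Order.TTheory GRing.Theory Num.Theory.
Local Open Scope ring_scope.
Local Open Scope fset_scope.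

Section Aux.
Local Open Scope ring_scope.
Variables (R : rcfType) (X : choiceType) (f : X -> R) (phi : X -> X) (A : {fset X}).

Lemma cost_ge0 (p : {perm A}) : 0 <= wcm_cost f phi p.
Proof. by apply: sumr_ge0 => i _; apply: sqr_ge0. Qed.

Lemma min_le (p : {perm A}) : wcm_min f phi A <= wcm_cost f phi p.
Proof. exact: bigmin_le. Qed.

Lemma min_le_D : wcm_min f phi A <= wcm_D f phi A.
Proof. exact: min_le. Qed.

Lemma min_ex : exists p : {perm A}, wcm_min f phi A = wcm_cost f phi p.
Proof.
rewrite /wcm_min.
apply: (big_ind (fun y => exists p : {perm A}, y = wcm_cost f phi p)).
- by exists 1%g.
- move=> a b [p ->] [q ->]; rewrite /Num.min.
  by case: ifP => _; [exists p|exists q].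
- by move=> p _; exists p.
Qed.

Lemma min_ge0 : 0 <= wcm_min f phi A.
Proof. by have [p ->] := min_ex; apply: cost_ge0. Qed.

Lemma cost_expand (p : {perm A}) : wcm_cost f phi p =
  \sum_(x : A) f (phi (val x)) ^+ 2
  - 2 * (\sum_(x : A) f (val x) * f (phi (val (p x))))
  + \sum_(x : A) f (val x) ^+ 2.
Proof.
rewrite /wcm_cost.
rewrite [X in X - _ + _](reindex_inj (@perm_inj _ p)) /=.
rewrite mulr_sumr -sumrN -!big_split /=.
by apply: eq_bigr => i _ /=; rewrite sqrrB; ring.
Qed.

Lemma sumphi (p : {perm A}) :
  \sum_(x : A) f (phi (val (p x))) = \sum_(x : A) f (phi (val x)).
Proof. by rewrite [RHS](reindex_inj (@perm_inj _ p)). Qed.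

End Aux.

Theorem proposition2 (R : rcfType) (X : choiceType) (f : X -> R) (phi : X -> X)
    (A : {fset X}) :
  wcm_D f phi A != 0 ->
  [/\ 0 <= WCM f phi A <= 1,
      (WCM f phi A = 0 <->
         (forall p : {perm A}, pairing_cov f phi p <= pairing_cov f phi (1%g : {perm A}))),
      (WCM f phi A = 0 <->
         (forall p : {perm A}, wcm_cost f phi (1%g : {perm A}) <= wcm_cost f phi p)),
      (WCM f phi A = 1 <->
         (exists p : {perm A}, p != 1%g /\ forall x : A, f (val x) = f (phi (val (p x)))))
    & (forall lam : R, 0 < lam -> WCM f phi A = WCM (fun x => lam * f x) phi A)].
Proof.
move=> Dn0.
have Dgt0 : 0 < wcm_D f phi A by rewrite lt0r Dn0 cost_ge0.
set D := wcm_D f phi A in Dn0 Dgt0 *.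
set m := wcm_min f phi A.
have m0 : 0 <= m by apply: min_ge0.
have mD : m <= D by apply: min_le_D.
have r0 : 0 <= m / D by rewrite divr_ge0 // ltW.
have r1 : m / D <= 1 by rewrite ler_pdivrMr // mul1r.
have s1 : Num.sqrt (m / D) <= 1 by rewrite -(sqrtr1 R) ler_sqrt.
have W0 : WCM f phi A = 0 <-> m = D.
  rewrite /WCM -/m -/D; split.
  - move/eqP; rewrite subr_eq0 eq_sym -(sqrtr1 R) eqr_sqrt // => /eqP.
    by move/(congr1 (fun t => t * D)); rewrite mulfVK // mul1r.
  - by move=> ->; rewrite divff // sqrtr1 subrr.
have WD : m = D <-> (forall p : {perm A}, wcm_cost f phi (1%g : {perm A}) <= wcm_cost f phi p).
  have -> : wcm_cost f phi (1%g : {perm A}) = D by [].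
  split.
  - by move=> <- p; apply: min_le.
  - move=> H; have [p hp] := @min_ex R X f phi A.
    by apply/eqP; rewrite eq_le mD /= /m hp H.
split.
- by rewrite /WCM -/m -/D subr_ge0 s1 /= lerBlDr lerDl sqrtr_ge0.
- rewrite W0 WD.
  have nA : 0 < (#|{: A}|)%:R :> R.
    rewrite ltr0n lt0n; apply/negP => /eqP HA; move/eqP: Dn0; apply.
    rewrite /D /wcm_D /wcm_cost; apply: big1 => x _.
    by move: (card0_eq HA x); rewrite !inE.
  have key : forall p : {perm A}, (pairing_cov f phi p <= pairing_cov f phi (1%g : {perm A})) =
      (wcm_cost f phi (1%g : {perm A}) <= wcm_cost f phi p).
    move=> p; rewrite /pairing_cov /= (@sumphi _ _ f phi _ p) (@sumphi _ _ f phi _ 1) !cost_expand.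
    rewrite lerD2r ler_pM2r ?invr_gt0 // lerD2r lerD2l lerN2.
    by rewrite ler_pM2l.
  by split => H p; [rewrite key | rewrite -key].
- by rewrite W0 WD.
- have W1 : WCM f phi A = 1 <-> m = 0.
    rewrite /WCM -/m -/D; split.
    - move=> h; have hs : Num.sqrt (m / D) = 0 by lra.
      move/eqP: hs; rewrite sqrtr_eq0 ler_pdivrMr // mul0r => hm.
      by apply/eqP; rewrite eq_le hm m0.
    - by move=> ->; rewrite mul0r sqrtr0 subr0.
  rewrite W1; split.
  - have [p hp] := @min_ex R X f phi A => m0'.
    have c0 : wcm_cost f phi p = 0 by rewrite -hp.
    exists p; split.
      by apply: contraNneq Dn0 => e; rewrite /D /wcm_D -e c0.
    move=> x; have := psumr_eq0P (fun i _ => sqr_ge0 (f (phi (\val (p i))) - f (\val i))) c0 (erefl true : true).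
    move=> /(_ x) /eqP; rewrite sqrf_eq0 subr_eq0 => /eqP ->.
    by [].
  - move=> [p [_ hp]].
    have c0 : wcm_cost f phi p = 0.
      by apply: big1 => x _; rewrite -hp subrr expr0n.
    by apply/eqP; rewrite eq_le m0 andbT -c0 min_le.
- move=> lam lam0.
  have l2 : 0 < lam ^+ 2 by rewrite exprn_gt0.
  have cl : forall p : {perm A}, wcm_cost (fun x => lam * f x) phi p = lam ^+ 2 * wcm_cost f phi p.
    move=> p; rewrite /wcm_cost mulr_sumr; apply: eq_bigr => x _; ring.
  have ml : wcm_min (fun x => lam * f x) phi A = lam ^+ 2 * m.
    rewrite /m /wcm_min /wcm_D.
    apply: (big_ind2 (fun a b => a = lam ^+ 2 * b)).
    - exact: cl.
    - by move=> y1 y2 z1 z2 -> ->; rewrite minr_pMr // ltW.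
    - by move=> p _; exact: cl.
  rewrite /WCM ml /wcm_D cl -/(wcm_D f phi A) -/D -/m -mulf_div divff ?mul1r //.
  by rewrite gt_eqF.
Qed.
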